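(* Let $V_1, V_2$ be jointly distributed binary random variables (values in $\{0,1\}$), and let $K = V_1 \oplus V_2$ (addition modulo $2$). Then the common-compression Slepian–Wolf rate for the pair $(V_1,V_2)$ satisfies $$R^{s.c.}_{SW} \le \max\big(H(K),\, H(V_1\mid K)\big).$$
   Context: Let $V_1,\dots,V_r$ be jointly distributed binary random variables with joint law $p(v_1,\dots,v_r)$, and for each $n$ let $(V_1[t],\dots,V_r[t])$, $t=1,\dots,n$, be i.i.d. copies; write $V_i^n$ for the column vector $(V_i[1],\dots,V_i[n])^t\in\mathbb{F}_2^n$. A rate $R\ge 0$ is achievable with a common compression matrix if for every $\epsilon>0$ and all sufficiently large $n$ there exist a single binary matrix $B$ of size $\lceil nR\rceil\times n$ and a decoding map $g$ such that $\Pr\big[g(BV_1^n,\dots,BV_r^n)\neq (V_1^n,\dots,V_r^n)\big]\le\epsilon$, where the products $BV_i^n$ are computed over $\mathbb{F}_2$. $R^{s.c.}_{SW}$ (Slepian–Wolf with the same compression matrices) denotes the infimum of all rates achievable with a common compression matrix. $H(\cdot)$ denotes Shannon entropy in bits. *)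

(* Defs.v *)
From Stdlib Require Import Reals List ZArith Bool.
Import ListNotations.
Open Scope R_scope.

Fixpoint all_seqs (n : nat) : list (list bool) :=
  match n with
  | O => [nil]
  | S k => flat_map (fun s => [false :: s; true :: s]) (all_seqs k)
  end.

(* Product over F_2 of an m x n binary matrix B (entry B i t in row i,
   column t) with the column vector x in F_2^n; result in F_2^m. *)
Definition compress (m n : nat) (B : nat -> nat -> bool) (x : list bool)
  : list bool :=
  map (fun i => fold_right xorb false
                  (map (fun t => andb (B i t) (nth t x false)) (seq 0 n)))
      (seq 0 m).

Definition Rsum (l : list R) : R := fold_right Rplus 0 l.

(* Probability of the pair of sequences (x, y) under n i.i.d. copies of
   (V1, V2) with joint law p. *)
Definition seq_prob (p : bool -> bool -> R) (x y : list bool) : R :=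
  fold_right Rmult 1 (map (fun ab => p (fst ab) (snd ab)) (combine x y)).

Definition pair_eqb (u v : list bool * list bool) : bool :=
  if list_eq_dec bool_dec (fst u) (fst v) then
    if list_eq_dec bool_dec (snd u) (snd v) then true else false
  else false.

(* Pr[ g(B V1^n, B V2^n) <> (V1^n, V2^n) ] for an m x n matrix B. *)
Definition err_prob (p : bool -> bool -> R) (n m : nat)
  (B : nat -> nat -> bool)
  (g : list bool -> list bool -> list bool * list bool) : R :=
  Rsum (flat_map (fun x =>
          map (fun y => seq_prob p x y *
                 (if pair_eqb (g (compress m n B x) (compress m n B y)) (x, y)
                  then 0 else 1))
              (all_seqs n))
        (all_seqs n)).

(* ceiling of a nonnegative real, as a nat:  ceil x = 1 - up(-x). *)
Definition ceil_nat (x : R) : nat := Z.to_nat (1 - up (- x))%Z.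

Definition achievable_sc (p : bool -> bool -> R) (Rt : R) : Prop :=
  0 <= Rt /\
  forall eps, eps > 0 ->
    exists N : nat, forall n : nat, (N <= n)%nat ->
      exists (B : nat -> nat -> bool)
             (g : list bool -> list bool -> list bool * list bool),
        err_prob p n (ceil_nat (INR n * Rt)) B g <= eps.

(* x log2 x with the convention 0 log 0 = 0. *)
Definition plog2 (x : R) : R := if Rle_dec x 0 then 0 else x * (ln x / ln 2).

Definition pK (p : bool -> bool -> R) (k : bool) : R :=
  p false (xorb false k) + p true (xorb true k).

Definition pV1K (p : bool -> bool -> R) (v k : bool) : R := p v (xorb v k).

Definition H_K (p : bool -> bool -> R) : R :=
  - (plog2 (pK p false) + plog2 (pK p true)).

Definition H_V1K (p : bool -> bool -> R) : R :=
  - (plog2 (pV1K p false false) + plog2 (pV1K p false true)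
     + plog2 (pV1K p true false) + plog2 (pV1K p true true)).

Definition H_V1_given_K (p : bool -> bool -> R) : R := H_V1K p - H_K p.

(* Main.v *)
Require Import Defs.
From Stdlib Require Import Reals List ZArith Bool Lra Lia.
Import ListNotations.
Open Scope R_scope.

Definition Sm {T} (l : list T) (f : T -> R) : R := Rsum (map f l).

Lemma Sm_nil {T} (f : T -> R) : Sm [] f = 0. Proof. reflexivity. Qed.
Lemma Sm_cons {T} (a : T) l f : Sm (a :: l) f = f a + Sm l f. Proof. reflexivity. Qed.
Lemma Sm_app {T} (l1 l2 : list T) f : Sm (l1 ++ l2) f = Sm l1 f + Sm l2 f.
Proof. induction l1; simpl; unfold Sm in *; simpl; [lra|]. rewrite IHl1; lra. Qed.
Lemma Sm_plus {T} (l : list T) f g : Sm l (fun x => f x + g x) = Sm l f + Sm l g.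
Proof. induction l; unfold Sm in *; simpl; [lra|]. rewrite IHl; lra. Qed.
Lemma Sm_scal {T} (l : list T) c f : Sm l (fun x => c * f x) = c * Sm l f.
Proof. induction l; unfold Sm in *; simpl; [lra|]. rewrite IHl; lra. Qed.
Lemma Sm_scal_r {T} (l : list T) c f : Sm l (fun x => f x * c) = Sm l f * c.
Proof. induction l; unfold Sm in *; simpl; [lra|]. rewrite IHl; lra. Qed.
Lemma Sm_ext_in {T} (l : list T) f g : (forall x, In x l -> f x = g x) -> Sm l f = Sm l g.
Proof. induction l; intros H; unfold Sm in *; simpl; auto. rewrite H by (left; auto).
  rewrite IHl; auto. intros; apply H; right; auto. Qed.
Lemma Sm_le_in {T} (l : list T) f g : (forall x, In x l -> f x <= g x) -> Sm l f <= Sm l g.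
Proof. induction l; intros H; unfold Sm in *; simpl; [lra|].
  assert (f a <= g a) by (apply H; left; auto).
  assert (Rsum (map f l) <= Rsum (map g l)) by (apply IHl; intros; apply H; right; auto). lra. Qed.
Lemma Sm_nonneg {T} (l : list T) f : (forall x, In x l -> 0 <= f x) -> 0 <= Sm l f.
Proof. intros H. replace 0 with (Sm l (fun _ => 0)). apply Sm_le_in; auto.
  induction l; unfold Sm in *; simpl; auto. rewrite IHl; auto. lra. intros; apply H; right; auto. Qed.
Lemma Sm_const {T} (l : list T) c : Sm l (fun _ => c) = INR (length l) * c.
Proof. induction l; unfold Sm in *; [simpl; lra|]. change (c + Rsum (map (fun _ => c) l) = INR (length (a :: l)) * c). simpl length. rewrite IHl, S_INR; lra. Qed.

Lemma Sm_swap {T U} (l1 : list T) (l2 : list U) f :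
  Sm l1 (fun x => Sm l2 (fun y => f x y)) = Sm l2 (fun y => Sm l1 (fun x => f x y)).
Proof. induction l1.
  - unfold Sm; simpl. induction l2; simpl; auto. rewrite <- IHl2; lra.
  - rewrite Sm_cons, IHl1. rewrite <- Sm_plus. reflexivity. Qed.
Lemma Sm_term_le {T} (l : list T) f a : In a l -> (forall x, In x l -> 0 <= f x) -> f a <= Sm l f.
Proof. induction l; simpl; [tauto|]. intros [->|H] Hp; unfold Sm in *; simpl.
  - assert (0 <= Rsum (map f l)) by (apply (Sm_nonneg l f); intros; apply Hp; auto). lra.
  - assert (f a <= Rsum (map f l)) by (apply IHl; auto). assert (0 <= f a0) by (apply Hp; auto). lra. Qed.
Lemma Rsum_flat_map {T U} (l1 : list T) (l2 : list U) h :
  Rsum (flat_map (fun x => map (h x) l2) l1) = Sm l1 (fun x => Sm l2 (h x)).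
Proof. induction l1; simpl; auto. fold (Sm l2 (h a)).
  change (Rsum (map (h a) l2 ++ flat_map (fun x => map (h x) l2) l1) = Sm (a :: l1) (fun x => Sm l2 (h x))).
  rewrite Sm_cons, <- IHl1. clear IHl1. generalize (flat_map (fun x => map (h x) l2) l1). intro r.
  unfold Sm. induction (map (h a) l2); simpl; lra. Qed.

Lemma Sm_all_seqs_S k g : Sm (all_seqs (Datatypes.S k)) g = Sm (all_seqs k) (fun s => g (false::s) + g (true::s)).
Proof. simpl. generalize (all_seqs k). induction l; simpl; auto.
  unfold Sm, Rsum in *; simpl in *. rewrite IHl. lra. Qed.

Lemma in_all_seqs n l : In l (all_seqs n) <-> length l = n.
Proof. revert l; induction n; intros l; simpl.
  - split; [intros [<-|[]]; auto | destruct l; simpl; intros; [auto|discriminate]].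
  - rewrite in_flat_map. split.
    + intros [s [Hs Hl]]. apply IHn in Hs. simpl in Hl. destruct Hl as [<-|[<-|[]]]; simpl; auto.
    + destruct l as [|b s]; simpl; intros H; [discriminate|]. exists s; split.
      apply IHn; lia. destruct b; simpl; auto.
Qed.

Lemma length_all_seqs n : length (all_seqs n) = (2 ^ n)%nat.
Proof. induction n; simpl; auto. rewrite <- IHn. generalize (all_seqs n). clear.
  induction l; simpl; auto. rewrite IHl. lia. Qed.

Definition pp (f : bool -> bool -> R) (x y : list bool) : R :=
  fold_right Rmult 1 (map (fun ab => f (fst ab) (snd ab)) (combine x y)).

Lemma pp_cons f a x b y : pp f (a::x) (b::y) = f a b * pp f x y.
Proof. reflexivity. Qed.

Lemma pp_sum f n : Sm (all_seqs n) (fun x => Sm (all_seqs n) (fun y => pp f x y))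
  = (f false false + f false true + f true false + f true true) ^ n.
Proof. induction n; [unfold Sm, pp; simpl; lra|].
  rewrite Sm_all_seqs_S. simpl pow. rewrite <- IHn, <- Sm_scal.
  apply Sm_ext_in; intros s _. rewrite !Sm_all_seqs_S, <- Sm_scal, <- Sm_plus.
  apply Sm_ext_in; intros t _. rewrite !pp_cons. lra. Qed.

Lemma pp_sum1 f n k : length k = n ->
  Sm (all_seqs n) (fun v => pp f v k) = fold_right Rmult 1 (map (fun b => f false b + f true b) k).
Proof. revert k; induction n; intros k Hk.
  - destruct k; [|discriminate]. unfold Sm, pp; simpl; lra.
  - destruct k as [|b k]; [discriminate|]. simpl in Hk. rewrite Sm_all_seqs_S.
    simpl map; simpl fold_right. rewrite <- IHn by lia. rewrite <- Sm_scal.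
    apply Sm_ext_in; intros s _. rewrite !pp_cons. lra. Qed.

Lemma pp_nonneg f x y : (forall a b, 0 <= f a b) -> 0 <= pp f x y.
Proof. intros H. unfold pp. induction (combine x y); simpl; [lra|].
  apply Rmult_le_pos; auto. Qed.

Lemma pp_mult f g x y : pp (fun a b => f a b * g a b) x y = pp f x y * pp g x y.
Proof. unfold pp. induction (combine x y); simpl; [lra|]. rewrite IHl; lra. Qed.

Lemma pp_le f g x y : (forall a b, 0 <= f a b <= g a b) -> pp f x y <= pp g x y.
Proof. intros H. unfold pp. induction (combine x y); simpl; [lra|].
  assert (0 <= fold_right Rmult 1 (map (fun ab => f (fst ab) (snd ab)) l)).
  { clear IHl. induction l; simpl; [lra|]. apply Rmult_le_pos; auto. apply H. }
  apply Rmult_le_compat; auto; apply H. Qed.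

Definition xorl (u w : list bool) : list bool := map (fun ab => xorb (fst ab) (snd ab)) (combine u w).

Lemma xorl_cons a u b w : xorl (a::u) (b::w) = xorb a b :: xorl u w.
Proof. reflexivity. Qed.

Lemma length_xorl u w : length u = length w -> length (xorl u w) = length u.
Proof. unfold xorl. rewrite length_map, length_combine. lia. Qed.

Lemma xorl_inv x y : length x = length y -> xorl x (xorl x y) = y.
Proof. revert y; induction x; destruct y; simpl; intros H; try discriminate; auto.
  rewrite !xorl_cons. f_equal. destruct a, b; auto. apply IHx; lia. Qed.

Lemma nth_xorl u w t : length u = length w -> nth t (xorl u w) false = xorb (nth t u false) (nth t w false).
Proof. revert w t; induction u; destruct w; intros t H; try discriminate.
  - destruct t; auto.
  - rewrite xorl_cons. destruct t; [reflexivity|]. cbn [nth]. apply IHu. simpl in H; lia. Qed.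

Lemma xorl_map {T} (f g : T -> bool) l : xorl (map f l) (map g l) = map (fun i => xorb (f i) (g i)) l.
Proof. induction l; simpl; auto. rewrite xorl_cons, IHl. auto. Qed.

Lemma fold_xor_map {T} (f g : T -> bool) l :
  fold_right xorb false (map (fun i => xorb (f i) (g i)) l) =
  xorb (fold_right xorb false (map f l)) (fold_right xorb false (map g l)).
Proof. induction l; simpl; auto. rewrite IHl.
  destruct (f a), (g a), (fold_right xorb false (map f l)), (fold_right xorb false (map g l)); auto. Qed.

Lemma compress_xorl m n B x y : length x = length y ->
  compress m n B (xorl x y) = xorl (compress m n B x) (compress m n B y).
Proof. intros H. unfold compress. rewrite xorl_map. apply map_ext; intros i.
  rewrite <- fold_xor_map. f_equal. apply map_ext; intros t.
  rewrite nth_xorl by auto. destruct (B i t), (nth t x false), (nth t y false); auto. Qed.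

Definition dotl (r k : list bool) : bool :=
  fold_right xorb false (map (fun ab => andb (fst ab) (snd ab)) (combine r k)).

Definition B_of (rs : list (list bool)) (i t : nat) : bool := nth t (nth i rs []) false.

Lemma dot_seq r k : length r = length k ->
  fold_right xorb false (map (fun t => nth t r false && nth t k false) (seq 0 (length r))) = dotl r k.
Proof. revert k; induction r; destruct k; simpl; intros H; try discriminate; auto.
  rewrite <- seq_shift, map_map. simpl. unfold dotl; simpl. f_equal. apply IHr. lia. Qed.

Lemma map_seq_nth {T U} (F : T -> U) (l : list T) d :
  map (fun i => F (nth i l d)) (seq 0 (length l)) = map F l.
Proof. induction l; simpl; auto. rewrite <- seq_shift, map_map. simpl. f_equal; auto. Qed.

Lemma compress_B_of m n rs k : length rs = m -> (forall r, In r rs -> length r = n) -> length k = n ->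
  compress m n (B_of rs) k = map (fun r => dotl r k) rs.
Proof. intros Hm Hr Hk. unfold compress, B_of. subst m.
  rewrite <- (map_seq_nth (fun r => dotl r k) rs []).
  apply map_ext_in. intros i Hi. apply in_seq in Hi.
  assert (length (nth i rs []) = n) by (apply Hr, nth_In; lia).
  rewrite <- H, <- dot_seq by lia. auto. Qed.

Fixpoint all_mats (n m : nat) : list (list (list bool)) :=
  match m with
  | O => [[]]
  | Datatypes.S m' => flat_map (fun rs => map (fun r => r :: rs) (all_seqs n)) (all_mats n m')
  end.

Lemma Sm_flat_map {T U} (f : T -> list U) L F : Sm (flat_map f L) F = Sm L (fun x => Sm (f x) F).
Proof. induction L; simpl; auto. rewrite Sm_app, IHL. reflexivity. Qed.

Lemma Sm_map {T U} (f : T -> U) L F : Sm (map f L) F = Sm L (fun x => F (f x)).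
Proof. unfold Sm. rewrite map_map. auto. Qed.

Lemma in_all_mats n m rs : In rs (all_mats n m) -> length rs = m /\ forall r, In r rs -> length r = n.
Proof. revert rs; induction m; simpl; intros rs H.
  - destruct H as [<-|[]]. simpl; split; auto; tauto.
  - apply in_flat_map in H. destruct H as [rs0 [H0 H1]]. apply in_map_iff in H1.
    destruct H1 as [r [<- Hr]]. apply IHm in H0. apply in_all_seqs in Hr. simpl. split; [lia|].
    intros r' [<-|H]; auto. apply H0; auto. Qed.

Lemma mats_prod n m h : Sm (all_mats n m) (fun rs => fold_right Rmult 1 (map h rs)) = (Sm (all_seqs n) h) ^ m.
Proof. induction m; simpl; [unfold Sm; simpl; lra|].
  rewrite Sm_flat_map. rewrite <- IHm, <- Sm_scal. apply Sm_ext_in; intros rs _.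
  rewrite Sm_map. simpl. rewrite Sm_scal_r. auto. Qed.

Lemma Sm_all_seqs_one n : Sm (all_seqs n) (fun _ => 1) = 2 ^ n.
Proof. rewrite Sm_const, length_all_seqs, pow_INR. simpl. replace (1+1) with 2 by lra. lra. Qed.

Lemma dotl_cons b r a k : dotl (b::r) (a::k) = xorb (b && a) (dotl r k).
Proof. reflexivity. Qed.

Lemma dot_count n : forall k k' c, length k = n -> length k' = n -> k <> k' ->
  Sm (all_seqs n) (fun r => if bool_dec (xorb (dotl r k) (dotl r k')) c then 1 else 0) = 2 ^ n / 2.
Proof. induction n; intros k k' c Hk Hk' Hne.
  - destruct k, k'; try discriminate. congruence.
  - destruct k as [|a k0]; try discriminate. destruct k' as [|a' k0']; try discriminate.
    simpl in Hk, Hk'. rewrite Sm_all_seqs_S. simpl pow.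
    destruct (list_eq_dec bool_dec k0 k0') as [<-|Hn].
    + assert (a <> a') by congruence.
      rewrite (Sm_ext_in _ _ (fun s => 1)). rewrite Sm_all_seqs_one; lra.
      intros s _. rewrite !dotl_cons.
      destruct a, a', c, (dotl s k0); simpl; try congruence;
        repeat (destruct bool_dec; try congruence); lra.
    + rewrite Sm_plus.
      rewrite (Sm_ext_in _ _ (fun r => if bool_dec (xorb (dotl r k0) (dotl r k0')) (xorb c (xorb (false && a) (false && a'))) then 1 else 0)).
      rewrite (Sm_ext_in (all_seqs n) (fun x => if bool_dec (xorb (dotl (true :: x) (a :: k0)) (dotl (true :: x) (a' :: k0'))) c then 1 else 0)
        (fun r => if bool_dec (xorb (dotl r k0) (dotl r k0')) (xorb c (xorb (true && a) (true && a'))) then 1 else 0)).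
      rewrite !IHn by auto. lra.
      * intros s _. rewrite !dotl_cons. destruct a, a', c, (dotl s k0), (dotl s k0'); simpl; auto.
      * intros s _. rewrite !dotl_cons. destruct a, a', c, (dotl s k0), (dotl s k0'); simpl; auto.
Qed.

Definition eqbl (u v : list bool) : bool := if list_eq_dec bool_dec u v then true else false.
Definition cands m n B s := filter (fun k => eqbl (compress m n B k) s) (all_seqs n).
Fixpoint amax (f : list bool -> R) (c : list bool) (l : list (list bool)) : list bool :=
  match l with [] => c | c'::l' => let b := amax f c' l' in if Rle_dec (f c) (f b) then b else c end.
Definition dec f (l : list (list bool)) := match l with [] => [] | c::l' => amax f c l' end.

Lemma amax_spec f c l : In (amax f c l) (c::l) /\ forall x, In x (c::l) -> f x <= f (amax f c l).
Proof. revert c; induction l; intros c; simpl.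
  - split; auto. intros x [<-|[]]; lra.
  - destruct (IHl a) as [H1 H2]. destruct Rle_dec.
    + split. right; auto. intros x [<-|Hx]; auto.
    + split. left; auto. intros x [<-|Hx]; [lra|]. specialize (H2 x Hx). lra. Qed.

Lemma dec_spec f l x : In x l -> In (dec f l) l /\ f x <= f (dec f l).
Proof. destruct l; simpl; [tauto|]. intros H. destruct (amax_spec f l l0) as [H1 H2].
  split; auto. Qed.

Lemma in_cands m n B s k : In k (cands m n B s) <-> length k = n /\ compress m n B k = s.
Proof. unfold cands. rewrite filter_In, in_all_seqs. unfold eqbl.
  destruct list_eq_dec; intuition congruence. Qed.

Definition PKs p k := fold_right Rmult 1 (map (pK p) k).
Definition Qs p v k := pp (pV1K p) v k.
Definition gdec p m n B (u1 u2 : list bool) : list bool * list bool :=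
  let kh := dec (PKs p) (cands m n B (xorl u1 u2)) in
  let vh := dec (fun v => Qs p v kh) (cands m n B u1) in (vh, xorl vh kh).

Definition ind (b : bool) : R := if b then 1 else 0.

Definition N1 p m n B k := Sm (all_seqs n) (fun k' =>
  (if Rle_dec (PKs p k) (PKs p k') then (if list_eq_dec bool_dec k' k then 0 else 1) else 0) *
  (if list_eq_dec bool_dec (compress m n B k') (compress m n B k) then 1 else 0)).
Definition N2 p m n B x k := Sm (all_seqs n) (fun v' =>
  (if Rle_dec (Qs p x k) (Qs p v' k) then (if list_eq_dec bool_dec v' x then 0 else 1) else 0) *
  (if list_eq_dec bool_dec (compress m n B v') (compress m n B x) then 1 else 0)).

Lemma N_term_nonneg (P : Prop) (d1 : {P}+{~P}) (Q : Prop) (d2 : {Q}+{~Q}) (R0 : Prop) (d3 : {R0}+{~R0}) :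
  0 <= (if d1 then (if d2 then 0 else 1) else 0) * (if d3 then 1 else 0).
Proof. destruct d1, d2, d3; lra. Qed.

Lemma pair_eqb_refl u : pair_eqb u u = true.
Proof. unfold pair_eqb. do 2 (destruct list_eq_dec; try congruence). Qed.

Lemma wrong_bound p m n B x y : length x = n -> length y = n ->
  (if pair_eqb (gdec p m n B (compress m n B x) (compress m n B y)) (x, y) then 0 else 1)
  <= Rmin 1 (N1 p m n B (xorl x y)) + Rmin 1 (N2 p m n B x (xorl x y)).
Proof. intros Hx Hy. set (k := xorl x y).
  assert (Hk : length k = n) by (unfold k; rewrite length_xorl; lia).
  assert (N1 p m n B k >= 0). { apply Rle_ge. unfold N1. apply Sm_nonneg. intros. apply N_term_nonneg. }
  assert (N2 p m n B x k >= 0). { apply Rle_ge, Sm_nonneg; intros; apply N_term_nonneg. }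
  assert (0 <= Rmin 1 (N1 p m n B k)) by (apply Rmin_glb; lra).
  assert (0 <= Rmin 1 (N2 p m n B x k)) by (apply Rmin_glb; lra).
  destruct pair_eqb eqn:E; [lra|].
  unfold gdec in E. rewrite <- compress_xorl in E by lia. fold k in E.
  set (kh := dec (PKs p) (cands m n B (compress m n B k))) in E.
  set (vh := dec (fun v => Qs p v kh) (cands m n B (compress m n B x))) in E.
  assert (Ck : In k (cands m n B (compress m n B k))) by (apply in_cands; auto).
  assert (Cx : In x (cands m n B (compress m n B x))) by (apply in_cands; auto).
  destruct (list_eq_dec bool_dec kh k) as [Ek|Nk].
  - destruct (list_eq_dec bool_dec vh x) as [Ev|Nv].
    + exfalso. rewrite Ek, Ev in E. unfold k in E. rewrite xorl_inv in E by lia.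
      rewrite pair_eqb_refl in E; discriminate.
    + destruct (dec_spec (fun v => Qs p v kh) _ x Cx) as [G1 G2]. fold vh in G1, G2.
      apply in_cands in G1. destruct G1 as [G1 G3]. rewrite Ek in G2.
      assert (1 <= N2 p m n B x k).
      { unfold N2. refine (Rle_trans _ _ _ _ (Sm_term_le _ _ vh _ _)); cbv beta.
        - destruct Rle_dec; [|lra]. destruct list_eq_dec; [congruence|].
          destruct list_eq_dec; [lra|congruence].
        - apply in_all_seqs; auto.
        - intros; apply N_term_nonneg. }
      assert (Rmin 1 (N2 p m n B x k) = 1) by (apply Rmin_left; lra). lra.
  - destruct (dec_spec (PKs p) _ k Ck) as [G1 G2]. fold kh in G1, G2.
    apply in_cands in G1. destruct G1 as [G1 G3].
    assert (1 <= N1 p m n B k).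
    { unfold N1. refine (Rle_trans _ _ _ _ (Sm_term_le _ _ kh _ _)); cbv beta.
        - destruct Rle_dec; [|lra]. destruct list_eq_dec; [congruence|].
          destruct list_eq_dec; [lra|congruence].
        - apply in_all_seqs; auto.
        - intros; apply N_term_nonneg. }
    assert (Rmin 1 (N1 p m n B k) = 1) by (apply Rmin_left; lra). lra.
Qed.

Lemma ind_map_eq {T} (f g : T -> bool) l :
  (if list_eq_dec bool_dec (map f l) (map g l) then 1 else 0) =
  fold_right Rmult 1 (map (fun r => if bool_dec (f r) (g r) then 1 else 0) l).
Proof. induction l; cbn [map fold_right]. destruct (list_eq_dec bool_dec (@nil bool) []); [lra|congruence].
  rewrite <- IHl. destruct (bool_dec (f a) (g a)) as [e|e];
  destruct (list_eq_dec bool_dec (map f l) (map g l)) as [e2|e2];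
  destruct (list_eq_dec bool_dec (f a :: map f l) (g a :: map g l)) as [e1|e1];
  first [lra | (exfalso; apply e1; congruence) | (injection e1; intros; congruence)]. Qed.

Lemma avg_eq n m k k' : length k = n -> length k' = n -> k' <> k ->
  Sm (all_mats n m) (fun rs => if list_eq_dec bool_dec (compress m n (B_of rs) k') (compress m n (B_of rs) k) then 1 else 0)
  = (2 ^ n / 2) ^ m.
Proof. intros Hk Hk' Hne.
  rewrite (Sm_ext_in _ _ (fun rs => fold_right Rmult 1 (map (fun r => if bool_dec (xorb (dotl r k') (dotl r k)) false then 1 else 0) rs))).
  - rewrite mats_prod, dot_count; auto.
  - intros rs Hrs. apply in_all_mats in Hrs. destruct Hrs as [H1 H2].
    rewrite !compress_B_of by auto. rewrite ind_map_eq. f_equal. apply map_ext; intros r.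
    destruct (dotl r k'), (dotl r k); simpl; repeat destruct bool_dec; try congruence; lra. Qed.

Lemma mats_count n m : Sm (all_mats n m) (fun _ => 1) = (2 ^ n) ^ m.
Proof. rewrite (Sm_ext_in _ _ (fun rs => fold_right Rmult 1 (map (fun _ => 1) rs))).
  rewrite mats_prod, Sm_all_seqs_one; auto.
  intros rs _. induction rs; simpl; auto. rewrite <- IHrs; lra. Qed.

Lemma Sm_min {T} (l : list T) f : Sm l (fun z => Rmin 1 (f z)) <= Rmin (Sm l (fun _ => 1)) (Sm l f).
Proof. apply Rmin_glb; apply Sm_le_in; intros; [apply Rmin_l | apply Rmin_r]. Qed.

Lemma Mh_pos n m : 0 <= (2^n)^m * (/2)^m.
Proof. apply Rmult_le_pos; apply pow_le. apply pow_le; lra. left; apply Rinv_0_lt_compat; lra. Qed.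

Lemma avg_N1 p n m k : length k = n ->
  Sm (all_mats n m) (fun rs => N1 p m n (B_of rs) k) <=
  (2 ^ n) ^ m * (/ 2) ^ m * Sm (all_seqs n) (fun k' => if Rle_dec (PKs p k) (PKs p k') then 1 else 0).
Proof. intros Hk. unfold N1. rewrite Sm_swap. rewrite <- Sm_scal. apply Sm_le_in. intros k' Hk'.
  apply in_all_seqs in Hk'. rewrite Sm_scal.
  destruct Rle_dec; [|rewrite Rmult_0_l, Rmult_0_r; lra]. destruct list_eq_dec; [rewrite Rmult_0_l; pose proof (Mh_pos n m); lra|].
  rewrite avg_eq by auto. rewrite <- Rpow_mult_distr. unfold Rdiv. lra. Qed.

Lemma avg_N2 p n m x k : length x = n ->
  Sm (all_mats n m) (fun rs => N2 p m n (B_of rs) x k) <=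
  (2 ^ n) ^ m * (/ 2) ^ m * Sm (all_seqs n) (fun v' => if Rle_dec (Qs p x k) (Qs p v' k) then 1 else 0).
Proof. intros Hx. unfold N2. rewrite Sm_swap. rewrite <- Sm_scal. apply Sm_le_in. intros k' Hk'.
  apply in_all_seqs in Hk'. rewrite Sm_scal.
  destruct Rle_dec; [|rewrite Rmult_0_l, Rmult_0_r; lra]. destruct list_eq_dec; [rewrite Rmult_0_l; pose proof (Mh_pos n m); lra|].
  rewrite avg_eq by auto. rewrite <- Rpow_mult_distr. unfold Rdiv. lra. Qed.

Definition pw (a e : R) := if Rle_dec a 0 then 0 else exp (e * ln a).

Lemma exp_le x y : x <= y -> exp x <= exp y.
Proof. intros [H|H]; [left; apply exp_increasing; auto | subst; lra]. Qed.
Lemma ln_le' a b : 0 < a -> a <= b -> ln a <= ln b.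
Proof. intros Ha [H|H]; [left; apply ln_increasing; auto|subst; lra]. Qed.
Lemma ln_nonpos a : 0 < a -> a <= 1 -> ln a <= 0.
Proof. intros. rewrite <- ln_1. apply ln_le'; auto. Qed.

Lemma pw_nonneg a e : 0 <= pw a e.
Proof. unfold pw. destruct Rle_dec; [lra|left; apply exp_pos]. Qed.
Lemma pw_pos a e : 0 < a -> pw a e = exp (e * ln a).
Proof. intros. unfold pw. destruct Rle_dec; [lra|auto]. Qed.
Lemma pw_one e : pw 1 e = 1.
Proof. rewrite pw_pos by lra. rewrite ln_1, Rmult_0_r, exp_0; auto. Qed.
Lemma pw_zero e : pw 0 e = 0.
Proof. unfold pw. destruct Rle_dec; lra. Qed.

Lemma pw_mult a b e : 0 <= a -> 0 <= b -> pw (a * b) e = pw a e * pw b e.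
Proof. intros [Ha|<-] [Hb|<-]; try (rewrite ?Rmult_0_l, ?Rmult_0_r, pw_zero; lra).
  rewrite !pw_pos by (try apply Rmult_lt_0_compat; auto). rewrite ln_mult by auto.
  rewrite <- exp_plus. f_equal; ring. Qed.

Lemma min_pw y s : 0 < y -> 0 <= s <= 1 -> Rmin 1 y <= pw y s.
Proof. intros Hy Hs. rewrite pw_pos by auto. destruct (Rle_dec 1 y).
  - rewrite Rmin_left by auto. assert (0 <= ln y) by (rewrite <- ln_1; apply ln_le'; lra).
    pose proof (exp_ineq1_le (s * ln y)). assert (0 <= s * ln y) by (apply Rmult_le_pos; lra). lra.
  - rewrite Rmin_right by lra. assert (ln y <= 0) by (apply ln_nonpos; lra).
    rewrite <- (exp_ln y) at 1 by auto. apply exp_le. nra. Qed.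

Lemma L1 P Q C h s : 0 <= P -> P <= Q -> 0 <= C -> C * Q <= 1 -> 0 < h -> 0 < s <= 1 ->
  P * Rmin 1 (h * C) <= pw h s * (P * pw Q (-s)).
Proof. intros HP HPQ HC HCQ Hh Hs. destruct HP as [HP|<-].
  2:{ rewrite !Rmult_0_l, Rmult_0_r; lra. }
  assert (HQ : 0 < Q) by lra.
  assert (Rmin 1 (h * C) <= Rmin 1 (h / Q)).
  { apply Rmin_glb. apply Rmin_l. eapply Rle_trans; [apply Rmin_r|].
    unfold Rdiv. apply Rmult_le_compat_l; [lra|]. apply (Rmult_le_reg_r Q); auto.
    rewrite Rinv_l by lra. lra. }
  assert (Rmin 1 (h / Q) <= pw (h / Q) s) by (apply min_pw; [apply Rdiv_lt_0_compat|]; lra).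
  rewrite !pw_pos in * by (try apply Rdiv_lt_0_compat; auto).
  unfold Rdiv in *. rewrite ln_mult, ln_Rinv in * by (try apply Rinv_0_lt_compat; auto).
  replace (exp (s * ln h) * (P * exp (- s * ln Q))) with (P * exp (s * (ln h + - ln Q))).
  apply Rmult_le_compat_l; lra.
  replace (s * (ln h + - ln Q)) with (s * ln h + (- s * ln Q)) by ring. rewrite exp_plus; ring. Qed.

Lemma L2 P Q C h s : 0 <= P -> 0 <= C -> C * P <= Q -> 0 < h -> 0 < s <= 1 ->
  P * Rmin 1 (h * C) <= pw h s * (pw P (1 - s) * pw Q s).
Proof. intros HP HC HCQ Hh Hs. destruct HP as [HP|<-].
  2:{ rewrite pw_zero, !Rmult_0_l, Rmult_0_r; lra. }
  destruct HC as [HC|<-].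
  2:{ rewrite Rmult_0_r, Rmin_right by lra. rewrite Rmult_0_r.
      apply Rmult_le_pos; [apply pw_nonneg|]. apply Rmult_le_pos; apply pw_nonneg. }
  assert (HQ : 0 < Q) by (assert (0 < C * P) by (apply Rmult_lt_0_compat; auto); lra).
  assert (Rmin 1 (h * C) <= Rmin 1 (h * Q / P)).
  { apply Rmin_glb. apply Rmin_l. eapply Rle_trans; [apply Rmin_r|].
    unfold Rdiv. rewrite Rmult_assoc. apply Rmult_le_compat_l; [lra|]. apply (Rmult_le_reg_r P); auto.
    rewrite Rmult_assoc, Rinv_l by lra. lra. }
  assert (0 < h * Q / P) by (apply Rdiv_lt_0_compat; [apply Rmult_lt_0_compat|]; auto).
  assert (Rmin 1 (h * Q / P) <= pw (h * Q / P) s) by (apply min_pw; lra).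
  rewrite !pw_pos in * by auto.
  unfold Rdiv in *. rewrite ln_mult, ln_mult, ln_Rinv in * by (try apply Rinv_0_lt_compat; try apply Rmult_lt_0_compat; auto).
  replace (exp (s * ln h) * (exp ((1 - s) * ln P) * exp (s * ln Q))) with (P * exp (s * (ln h + ln Q + - ln P))).
  apply Rmult_le_compat_l; lra.
  rewrite <- (exp_ln P) at 1 by auto. rewrite <- !exp_plus. f_equal; ring. Qed.

Lemma exp_quad t : 0 <= t -> exp t <= 1 + t + t ^ 2 * exp t.
Proof. intros Ht. pose proof (exp_ineq1_le (- t)).
  assert (exp (-t) * exp t = 1) by (rewrite <- exp_plus; replace (-t + t) with 0 by ring; apply exp_0).
  assert (0 < exp t) by apply exp_pos.
  assert (exp t - 1 <= t * exp t) by nra.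
  nra. Qed.

Lemma core P t : 0 <= t -> 0 < P -> P * exp t <= 1 -> P * exp t <= P + P * t + t ^ 2.
Proof. intros Ht HP H. pose proof (exp_quad t Ht).
  assert (P * exp t <= P * (1 + t + t ^ 2 * exp t)) by (apply Rmult_le_compat_l; lra).
  assert (0 <= t ^ 2) by (apply pow_le; auto). nra. Qed.

Lemma T1 P Q s : 0 <= P -> P <= Q -> Q <= 1 -> 0 <= s <= 1 ->
  P * pw Q (-s) <= P - s * (P * ln Q) + s ^ 2 * (ln Q) ^ 2.
Proof. intros HP HPQ HQ1 Hs. destruct HP as [HP|<-].
  2:{ rewrite !Rmult_0_l, Rmult_0_r. assert (0 <= s^2 * ln Q ^ 2) by (apply Rmult_le_pos; apply pow2_ge_0). lra. }
  assert (0 < Q) by lra. rewrite pw_pos by auto. assert (ln Q <= 0) by (apply ln_nonpos; auto).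
  set (t := - s * ln Q). assert (Ht : 0 <= t) by (unfold t; nra).
  assert (Hle : P * exp t <= 1).
  { apply Rle_trans with (Q * exp t). apply Rmult_le_compat_r; [left; apply exp_pos|auto].
    rewrite <- (exp_ln Q) at 1 by auto. rewrite <- exp_plus, <- exp_0. apply exp_le. unfold t; nra. }
  pose proof (core P t Ht HP Hle) as Hc. unfold t in Hc. replace (s ^ 2 * ln Q ^ 2) with ((- s * ln Q) ^ 2) by ring.
  unfold t. replace (P * (- s * ln Q)) with (- (s * (P * ln Q))) in Hc by ring. lra. Qed.

Lemma T2 P Q s : 0 <= P -> P <= Q -> Q <= 1 -> 0 <= s <= 1 ->
  pw P (1 - s) * pw Q s <= P - s * (P * (ln P - ln Q)) + s ^ 2 * (ln P - ln Q) ^ 2.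
Proof. intros HP HPQ HQ1 Hs. destruct HP as [HP|<-].
  2:{ rewrite pw_zero, !Rmult_0_l, Rmult_0_r. assert (0 <= s^2 * (ln 0 - ln Q) ^ 2) by (apply Rmult_le_pos; apply pow2_ge_0). lra. }
  assert (0 < Q) by lra. rewrite !pw_pos by auto. assert (ln Q <= 0) by (apply ln_nonpos; auto).
  assert (ln P <= ln Q) by (apply ln_le'; auto).
  set (t := - s * (ln P - ln Q)). assert (Ht : 0 <= t) by (unfold t; nra).
  replace (exp ((1 - s) * ln P) * exp (s * ln Q)) with (P * exp t).
  2:{ unfold t. rewrite <- (exp_ln P) at 1 by auto. rewrite <- !exp_plus. f_equal; ring. }
  assert (Hle : P * exp t <= 1).
  { rewrite <- (exp_ln P) at 1 by auto. rewrite <- exp_plus, <- exp_0. apply exp_le. unfold t; nra. }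
  pose proof (core P t Ht HP Hle) as Hc. unfold t in Hc. replace (s ^ 2 * (ln P - ln Q) ^ 2) with ((- s * (ln P - ln Q)) ^ 2) by ring.
  unfold t. replace (P * (- s * (ln P - ln Q))) with (- (s * (P * (ln P - ln Q)))) in Hc by ring. lra. Qed.

Lemma pw_pp f e x y : (forall a b, 0 <= f a b) -> pw (pp f x y) e = pp (fun a b => pw (f a b) e) x y.
Proof. intros H. unfold pp. induction (combine x y); simpl. apply pw_one.
  rewrite pw_mult, IHl; auto. clear IHl. induction l; simpl; [lra|]. apply Rmult_le_pos; auto. Qed.

Lemma seq_sum1 g n : Sm (all_seqs n) (fun k => fold_right Rmult 1 (map g k)) = (g false + g true) ^ n.
Proof. induction n; [unfold Sm; simpl; lra|]. rewrite Sm_all_seqs_S. simpl pow. rewrite <- IHn, <- Sm_scal.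
  apply Sm_ext_in; intros; simpl; lra. Qed.

Lemma count_bound {T} (l : list T) f a : 0 <= a -> (forall z, 0 <= f z) ->
  Sm l (fun z => if Rle_dec a (f z) then 1 else 0) * a <= Sm l f.
Proof. intros Ha Hf. rewrite <- Sm_scal_r. apply Sm_le_in; intros z _. destruct Rle_dec; try lra.
  rewrite Rmult_0_l; apply Hf. Qed.

Lemma Rmin_scal a x y : 0 < a -> Rmin (a * x) (a * y) = a * Rmin x y.
Proof. intros Ha. unfold Rmin. destruct Rle_dec; destruct Rle_dec; try lra; nra. Qed.

Section Main.
Variable p : bool -> bool -> R.
Hypothesis Hnn : forall a b, 0 <= p a b.
Hypothesis Hsum : p false false + p false true + p true false + p true true = 1.

Lemma pK_nonneg b : 0 <= pK p b.
Proof. unfold pK. pose proof (Hnn false (xorb false b)). pose proof (Hnn true (xorb true b)). lra. Qed.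
Lemma pK_sum : pK p false + pK p true = 1.
Proof. unfold pK; simpl; lra. Qed.
Lemma pK_le1 b : pK p b <= 1.
Proof. pose proof pK_sum; pose proof (pK_nonneg false); pose proof (pK_nonneg true). destruct b; lra. Qed.
Lemma p_le_pK a b : p a b <= pK p (xorb a b).
Proof. unfold pK. pose proof (Hnn false false); pose proof (Hnn false true); pose proof (Hnn true false); pose proof (Hnn true true).
  destruct a, b; simpl; lra. Qed.

Lemma PKs_nonneg k : 0 <= PKs p k.
Proof. unfold PKs; induction k; simpl; [lra|]. apply Rmult_le_pos; auto. apply pK_nonneg. Qed.
Lemma PKs_sum n : Sm (all_seqs n) (PKs p) = 1.
Proof. unfold PKs. rewrite seq_sum1, pK_sum. apply pow1. Qed.
Lemma PKs_xorl x y : PKs p (xorl x y) = pp (fun a b => pK p (xorb a b)) x y.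
Proof. unfold PKs, xorl, pp. rewrite map_map. auto. Qed.
Lemma Qs_xorl x y : length x = length y -> Qs p x (xorl x y) = seq_prob p x y.
Proof. change (seq_prob p x y) with (pp p x y). unfold Qs.
  revert y; induction x; destruct y; intros H; try discriminate; auto.
  rewrite xorl_cons, !pp_cons, IHx by (simpl in H; lia). unfold pV1K. destruct a, b; auto. Qed.
Lemma Qs_nonneg v k : 0 <= Qs p v k.
Proof. apply pp_nonneg. intros; apply Hnn. Qed.
Lemma Qs_sum n k : length k = n -> Sm (all_seqs n) (fun v => Qs p v k) = PKs p k.
Proof. intros H. unfold Qs. rewrite pp_sum1 by auto. auto. Qed.

Definition F1 s a b := p a b * pw (pK p (xorb a b)) (-s).
Definition F2 s a b := pw (p a b) (1 - s) * pw (pK p (xorb a b)) s.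

Lemma pair_bound n m s x y : length x = n -> length y = n -> 0 < s <= 1 ->
  Sm (all_mats n m) (fun rs => seq_prob p x y *
     (if pair_eqb (gdec p m n (B_of rs) (compress m n (B_of rs) x) (compress m n (B_of rs) y)) (x, y) then 0 else 1))
  <= (2 ^ n) ^ m * (pw ((/2)^m) s * (pp (F1 s) x y + pp (F2 s) x y)).
Proof. intros Hx Hy Hs. set (P := seq_prob p x y). set (k := xorl x y).
  assert (Hk : length k = n) by (unfold k; rewrite length_xorl; lia).
  assert (HP : 0 <= P) by (apply pp_nonneg; auto).
  set (Mx := (2 ^ n) ^ m). set (h := (/ 2) ^ m).
  assert (HM : 0 < Mx) by (apply pow_lt, pow_lt; lra).
  assert (Hh : 0 < h) by (apply pow_lt, Rinv_0_lt_compat; lra).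
  set (C1 := Sm (all_seqs n) (fun k' => if Rle_dec (PKs p k) (PKs p k') then 1 else 0)).
  set (C2 := Sm (all_seqs n) (fun v' => if Rle_dec (Qs p x k) (Qs p v' k) then 1 else 0)).
  assert (HC1 : 0 <= C1) by (apply Sm_nonneg; intros; destruct Rle_dec; lra).
  assert (HC2 : 0 <= C2) by (apply Sm_nonneg; intros; destruct Rle_dec; lra).
  apply Rle_trans with (P * (Mx * Rmin 1 (h * C1) + Mx * Rmin 1 (h * C2))).
  { rewrite Sm_scal. apply Rmult_le_compat_l; auto.
    eapply Rle_trans. apply Sm_le_in. intros rs Hrs. apply in_all_mats in Hrs.
    apply (wrong_bound p m n (B_of rs) x y Hx Hy). rewrite Sm_plus. fold k.
    apply Rplus_le_compat.
    - eapply Rle_trans; [apply Sm_min|]. rewrite mats_count. fold Mx.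
      rewrite <- Rmin_scal by auto. rewrite Rmult_1_r. apply Rle_min_compat_l. rewrite <- Rmult_assoc. apply avg_N1; auto.
    - eapply Rle_trans; [apply Sm_min|]. rewrite mats_count. fold Mx.
      rewrite <- Rmin_scal by auto. rewrite Rmult_1_r. apply Rle_min_compat_l. rewrite <- Rmult_assoc. apply avg_N2; auto. }
  rewrite <- Rmult_plus_distr_l.
  replace (P * (Mx * (Rmin 1 (h * C1) + Rmin 1 (h * C2)))) with (Mx * (P * Rmin 1 (h * C1) + P * Rmin 1 (h * C2))) by ring.
  apply Rmult_le_compat_l; [lra|]. rewrite Rmult_plus_distr_l. apply Rplus_le_compat.
  - apply Rle_trans with (pw h s * (P * pw (PKs p k) (-s))).
    + apply L1; auto. unfold P, k. rewrite PKs_xorl. apply pp_le. intros; split; [apply Hnn|apply p_le_pK].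
      rewrite <- (PKs_sum n). apply count_bound. apply PKs_nonneg. apply PKs_nonneg.
    + right. f_equal. unfold P, k, F1. rewrite pp_mult, PKs_xorl, pw_pp. auto. intros; apply pK_nonneg.
  - apply Rle_trans with (pw h s * (pw P (1 - s) * pw (PKs p k) s)).
    + apply L2; auto. rewrite <- (Qs_sum n k Hk). unfold P. rewrite <- Qs_xorl by lia. fold k.
      apply count_bound. apply Qs_nonneg. intros; apply Qs_nonneg.
    + right. f_equal. unfold P, k, F2. rewrite pp_mult, PKs_xorl, !pw_pp. auto. intros; apply pK_nonneg. auto. Qed.
End Main.

Lemma exists_small {T} (l : list T) f c : l <> [] -> Sm l f <= Sm l (fun _ => c) -> exists z, In z l /\ f z <= c.
Proof. induction l as [|a l IH]; intros Hne H; [congruence|].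
  destruct (Rle_dec (f a) c) as [Ha|Ha]. exists a; split; [left|]; auto.
  rewrite !Sm_cons in H. destruct l as [|b l'].
  - unfold Sm in H; simpl in H. lra.
  - destruct (IH ltac:(discriminate)) as [z [Hz Hfz]]. lra. exists z; split; [right|]; auto. Qed.

Lemma xlnx x : 0 <= x -> x * ln x = ln 2 * plog2 x.
Proof. intros Hx. unfold plog2. destruct Rle_dec.
  - assert (x = 0) by lra. subst. ring.
  - assert (0 < ln 2) by (rewrite <- ln_1; apply ln_increasing; lra). field. lra. Qed.

Lemma ln2_pos : 0 < ln 2.
Proof. rewrite <- ln_1; apply ln_increasing; lra. Qed.

Lemma exp_pow_le a n : exp a ^ n = exp (INR n * a).
Proof. induction n. simpl. rewrite Rmult_0_l, exp_0; auto.
  rewrite S_INR. simpl pow. rewrite IHn, <- exp_plus. f_equal; ring. Qed.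

Lemma ceil_ge x : 0 <= x -> x <= INR (ceil_nat x).
Proof. intros Hx. unfold ceil_nat. destruct (archimed (- x)) as [H1 H2].
  assert (Hz : x <= IZR (1 - up (- x))) by (rewrite minus_IZR; lra).
  assert (H0 : (0 <= 1 - up (- x))%Z) by (apply le_IZR; lra).
  rewrite INR_IZR_INZ, Z2Nat.id by auto. auto. Qed.

Section Main2.
Variable p : bool -> bool -> R.
Hypothesis Hnn : forall a b, 0 <= p a b.
Hypothesis Hsum : p false false + p false true + p true false + p true true = 1.

Definition A1 s := F1 p s false false + F1 p s false true + F1 p s true false + F1 p s true true.
Definition A2 s := F2 p s false false + F2 p s false true + F2 p s true false + F2 p s true true.

Lemma total_bound n m s : 0 < s <= 1 ->
  Sm (all_mats n m) (fun rs => err_prob p n m (B_of rs) (gdec p m n (B_of rs)))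
  <= Sm (all_mats n m) (fun _ => pw ((/2)^m) s * (A1 s ^ n + A2 s ^ n)).
Proof. intros Hs. rewrite Sm_const.
  replace (INR (length (all_mats n m))) with ((2 ^ n) ^ m).
  2:{ rewrite <- mats_count, Sm_const. ring. }
  unfold err_prob. rewrite (Sm_ext_in _ _ (fun rs => Sm (all_seqs n) (fun x => Sm (all_seqs n) (fun y =>
      seq_prob p x y * (if pair_eqb (gdec p m n (B_of rs) (compress m n (B_of rs) x) (compress m n (B_of rs) y)) (x, y) then 0 else 1))))).
  2:{ intros; apply Rsum_flat_map. }
  rewrite Sm_swap. rewrite (Sm_ext_in (all_seqs n) _ (fun x => Sm (all_seqs n) (fun y => Sm (all_mats n m) (fun rs =>
      seq_prob p x y * (if pair_eqb (gdec p m n (B_of rs) (compress m n (B_of rs) x) (compress m n (B_of rs) y)) (x, y) then 0 else 1))))).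
  2:{ intros; apply Sm_swap. }
  apply Rle_trans with (Sm (all_seqs n) (fun x => Sm (all_seqs n) (fun y => (2 ^ n) ^ m * (pw ((/2)^m) s * (pp (F1 p s) x y + pp (F2 p s) x y))))).
  - apply Sm_le_in; intros x Hx. apply Sm_le_in; intros y Hy. apply in_all_seqs in Hx, Hy.
    apply pair_bound; auto.
  - right. rewrite (Sm_ext_in _ _ (fun x => (2 ^ n) ^ m * pw ((/2)^m) s * (Sm (all_seqs n) (fun y => pp (F1 p s) x y) + Sm (all_seqs n) (fun y => pp (F2 p s) x y)))).
    2:{ intros. rewrite <- Sm_plus, <- Sm_scal. apply Sm_ext_in; intros; ring. }
    rewrite Sm_scal, Sm_plus, !pp_sum. unfold A1, A2. ring. Qed.

Lemma exists_B n m s : 0 < s <= 1 ->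
  exists B g, err_prob p n m B g <= pw ((/2)^m) s * (A1 s ^ n + A2 s ^ n).
Proof. intros Hs. assert (Hne : all_mats n m <> []).
  { intros E. pose proof (mats_count n m) as H. rewrite E in H. unfold Sm in H; simpl in H.
    assert (0 < (2 ^ n) ^ m) by (apply pow_lt, pow_lt; lra). lra. }
  destruct (exists_small (all_mats n m) _ _ Hne (total_bound n m s Hs)) as [rs [_ H]].
  exists (B_of rs), (gdec p m n (B_of rs)). auto. Qed.

Lemma sum_pln : p false false * ln (pK p (xorb false false)) + p false true * ln (pK p (xorb false true))
  + p true false * ln (pK p (xorb true false)) + p true true * ln (pK p (xorb true true)) = - ln 2 * H_K p.
Proof. simpl xorb. set (a := ln (pK p false)); set (b := ln (pK p true)).
  transitivity (pK p false * a + pK p true * b). unfold pK; simpl; ring.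
  unfold a, b. rewrite !xlnx by (apply pK_nonneg; auto). unfold H_K. ring. Qed.

Lemma sum_plnp : p false false * ln (p false false) + p false true * ln (p false true)
  + p true false * ln (p true false) + p true true * ln (p true true) = - ln 2 * H_V1K p.
Proof. rewrite !xlnx by auto. unfold H_V1K, pV1K. simpl. ring. Qed.

Lemma A1_bound s : 0 <= s <= 1 ->
  A1 s <= 1 + s * ln 2 * H_K p + s ^ 2 * ((ln (pK p false)) ^ 2 + (ln (pK p true)) ^ 2 + (ln (pK p true)) ^ 2 + (ln (pK p false)) ^ 2).
Proof. intros Hs. unfold A1, F1.
  pose proof (sum_pln).
  assert (forall a b, p a b * pw (pK p (xorb a b)) (- s) <= p a b - s * (p a b * ln (pK p (xorb a b))) + s ^ 2 * ln (pK p (xorb a b)) ^ 2).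
  { intros a b. apply T1; auto. apply p_le_pK; auto. apply pK_le1; auto. }
  pose proof (H0 false false); pose proof (H0 false true); pose proof (H0 true false); pose proof (H0 true true).
  simpl xorb in *.
  eapply Rle_trans. { apply Rplus_le_compat; [apply Rplus_le_compat; [apply Rplus_le_compat|]|]; eassumption. }
  right. simpl xorb in H.
  transitivity ((p false false + p false true + p true false + p true true)
    - s * (p false false * ln (pK p false) + p false true * ln (pK p true) + p true false * ln (pK p true) + p true true * ln (pK p false))
    + s ^ 2 * ((ln (pK p false)) ^ 2 + (ln (pK p true)) ^ 2 + (ln (pK p true)) ^ 2 + (ln (pK p false)) ^ 2)).
  ring. rewrite H, Hsum. ring. Qed.

Lemma A2_bound s : 0 <= s <= 1 ->
  A2 s <= 1 + s * ln 2 * H_V1_given_K p + s ^ 2 * ((ln (p false false) - ln (pK p false)) ^ 2 + (ln (p false true) - ln (pK p true)) ^ 2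
     + (ln (p true false) - ln (pK p true)) ^ 2 + (ln (p true true) - ln (pK p false)) ^ 2).
Proof. intros Hs. unfold A2, F2.
  pose proof sum_pln as H. pose proof sum_plnp as H'.
  assert (H0 : forall a b, pw (p a b) (1 - s) * pw (pK p (xorb a b)) s <= p a b - s * (p a b * (ln (p a b) - ln (pK p (xorb a b)))) + s ^ 2 * (ln (p a b) - ln (pK p (xorb a b))) ^ 2).
  { intros a b. apply T2; auto. apply p_le_pK; auto. apply pK_le1; auto. }
  pose proof (H0 false false); pose proof (H0 false true); pose proof (H0 true false); pose proof (H0 true true).
  simpl xorb in *.
  eapply Rle_trans. { apply Rplus_le_compat; [apply Rplus_le_compat; [apply Rplus_le_compat|]|]; eassumption. }
  right. unfold H_V1_given_K.
  transitivity ((p false false + p false true + p true false + p true true)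
    - s * ((p false false * ln (p false false) + p false true * ln (p false true) + p true false * ln (p true false) + p true true * ln (p true true))
       - (p false false * ln (pK p false) + p false true * ln (pK p true) + p true false * ln (pK p true) + p true true * ln (pK p false)))
    + s ^ 2 * ((ln (p false false) - ln (pK p false)) ^ 2 + (ln (p false true) - ln (pK p true)) ^ 2
     + (ln (p true false) - ln (pK p true)) ^ 2 + (ln (p true true) - ln (pK p false)) ^ 2)).
  ring. rewrite H, H', Hsum. ring. Qed.

Lemma plog2_nonpos x : 0 <= x <= 1 -> plog2 x <= 0.
Proof. intros Hx. unfold plog2. destruct Rle_dec; [lra|].
  assert (ln x <= 0) by (apply ln_nonpos; lra). pose proof ln2_pos.
  assert (0 <= x * (- ln x / ln 2)). { apply Rmult_le_pos; [lra|]. unfold Rdiv. apply Rmult_le_pos; [lra|]. left; apply Rinv_0_lt_compat; auto. }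
  unfold Rdiv in *. lra. Qed.

Lemma H_K_nonneg : 0 <= H_K p.
Proof. unfold H_K. pose proof (pK_nonneg p Hnn false); pose proof (pK_nonneg p Hnn true).
  pose proof (pK_le1 p Hnn Hsum false); pose proof (pK_le1 p Hnn Hsum true).
  pose proof (plog2_nonpos (pK p false)); pose proof (plog2_nonpos (pK p true)). lra. Qed.

End Main2.

Lemma IZR_le_to_nat z : IZR z <= INR (Z.to_nat z).
Proof. destruct (Z_le_gt_dec 0 z).
  - rewrite INR_IZR_INZ, Z2Nat.id by auto. lra.
  - destruct z; try lia. simpl. apply IZR_le. lia. Qed.

Lemma key_ineq n m s L H c C d : 0 <= INR n -> 0 <= s -> 0 < L -> H <= c -> s * C <= L * d / 4 ->
  INR n * (c + d / 2) <= INR m ->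
  INR n * (s * L * H + s ^ 2 * C) + s * (INR m * - L) <= - (INR n * (s * L * d / 4)).
Proof. intros Hn Hs HL HH HC Hm.
  assert (s * L * INR n * (c + d/2) <= s * L * INR m).
  { rewrite Rmult_assoc. apply Rmult_le_compat_l; [nra|]. lra. }
  assert (INR n * (s * L * H) <= INR n * (s * L * c)).
  { apply Rmult_le_compat_l; auto. apply Rmult_le_compat_l; nra. }
  assert (INR n * (s ^ 2 * C) <= INR n * (s * (L * d / 4))).
  { apply Rmult_le_compat_l; auto. replace (s^2 * C) with (s * (s * C)) by ring. apply Rmult_le_compat_l; auto. }
  nra. Qed.

Theorem claim1 (p : bool -> bool -> R)
  (Hnn : forall a b, 0 <= p a b)
  (Hsum : p false false + p false true + p true false + p true true = 1) :
  forall delta, delta > 0 ->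
    exists Rt, achievable_sc p Rt /\
      Rt <= Rmax (H_K p) (H_V1_given_K p) + delta.
Proof.
  intros delta Hd. set (c := Rmax (H_K p) (H_V1_given_K p)).
  pose proof (H_K_nonneg p Hnn Hsum) as HK0.
  assert (Hc1 : H_K p <= c) by apply Rmax_l. assert (Hc2 : H_V1_given_K p <= c) by apply Rmax_r.
  exists (c + delta / 2). split; [|lra]. split; [lra|].
  intros eps He.
  set (C1 := (ln (pK p false)) ^ 2 + (ln (pK p true)) ^ 2 + (ln (pK p true)) ^ 2 + (ln (pK p false)) ^ 2).
  set (C2 := (ln (p false false) - ln (pK p false)) ^ 2 + (ln (p false true) - ln (pK p true)) ^ 2
     + (ln (p true false) - ln (pK p true)) ^ 2 + (ln (p true true) - ln (pK p false)) ^ 2).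
  assert (HC1 : 0 <= C1) by (unfold C1; repeat apply Rplus_le_le_0_compat; apply pow2_ge_0).
  assert (HC2 : 0 <= C2) by (unfold C2; repeat apply Rplus_le_le_0_compat; apply pow2_ge_0).
  pose proof ln2_pos as HL.
  set (s := Rmin 1 (ln 2 * delta / (4 * (C1 + C2 + 1)))).
  assert (Hs0 : 0 < s).
  { unfold s. apply Rmin_glb_lt; [lra|]. apply Rdiv_lt_0_compat; [nra|lra]. }
  assert (Hs1 : s <= 1) by apply Rmin_l.
  assert (HsC : s * (C1 + C2 + 1) <= ln 2 * delta / 4).
  { apply Rle_trans with (ln 2 * delta / (4 * (C1 + C2 + 1)) * (C1 + C2 + 1)).
    apply Rmult_le_compat_r; [lra|apply Rmin_r]. right. field. lra. }
  assert (HsC1 : s * C1 <= ln 2 * delta / 4) by nra.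
  assert (HsC2 : s * C2 <= ln 2 * delta / 4) by nra.
  set (kap := s * ln 2 * delta / 4).
  assert (Hk : 0 < kap) by (unfold kap; apply Rdiv_lt_0_compat; [apply Rmult_lt_0_compat; [nra|lra]|lra]).
  exists (Datatypes.S (Z.to_nat (up (2 / (kap * eps))))).
  intros n Hn. set (m := ceil_nat (INR n * (c + delta / 2))).
  destruct (exists_B p Hnn Hsum n m s ltac:(lra)) as [B [g HB]]. exists B, g.
  eapply Rle_trans; [apply HB|].
  assert (HnN : 2 / (kap * eps) <= INR n).
  { destruct (archimed (2 / (kap * eps))) as [Ha _]. pose proof (IZR_le_to_nat (up (2 / (kap * eps)))).
    apply le_INR in Hn. rewrite S_INR in Hn. lra. }
  assert (Hn0 : 0 <= INR n) by apply pos_INR.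
  assert (Hm : INR n * (c + delta / 2) <= INR m) by (apply ceil_ge; nra).
  assert (Hpw : pw ((/ 2) ^ m) s = exp (s * (INR m * - ln 2))).
  { rewrite pw_pos by (apply pow_lt, Rinv_0_lt_compat; lra). rewrite ln_pow, ln_Rinv by lra. auto. }
  assert (HA1 : A1 p s ^ n <= exp (INR n * (s * ln 2 * H_K p + s ^ 2 * C1))).
  { rewrite <- exp_pow_le. apply pow_incr. split.
    - unfold A1, F1. pose proof (pw_nonneg (pK p (xorb false false)) (-s)). pose proof (pw_nonneg (pK p (xorb false true)) (-s)).
      pose proof (pw_nonneg (pK p (xorb true false)) (-s)). pose proof (pw_nonneg (pK p (xorb true true)) (-s)).
      pose proof (Hnn false false); pose proof (Hnn false true); pose proof (Hnn true false); pose proof (Hnn true true).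
      repeat apply Rplus_le_le_0_compat; apply Rmult_le_pos; auto.
    - eapply Rle_trans. apply A1_bound; auto; lra. match goal with |- _ <= exp ?x => pose proof (exp_ineq1_le x) end; unfold C1 in *; lra. }
  assert (HA2 : A2 p s ^ n <= exp (INR n * (s * ln 2 * H_V1_given_K p + s ^ 2 * C2))).
  { rewrite <- exp_pow_le. apply pow_incr. split.
    - unfold A2, F2. repeat apply Rplus_le_le_0_compat; apply Rmult_le_pos; apply pw_nonneg.
    - eapply Rle_trans. apply A2_bound; auto; lra. match goal with |- _ <= exp ?x => pose proof (exp_ineq1_le x) end; unfold C2 in *; lra. }
  assert (HE : exp (- (INR n * kap)) <= eps / 2).
  { pose proof (exp_ineq1_le (INR n * kap)).
    assert (2 / eps <= INR n * kap).
    { apply Rle_trans with (2 / (kap * eps) * kap). right; field; lra. apply Rmult_le_compat_r; lra. }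
    rewrite exp_Ropp. replace (eps / 2) with (/ (2 / eps)) by (field; lra).
    apply Rinv_le_contravar. apply Rdiv_lt_0_compat; lra. lra. }
  rewrite Hpw, Rmult_plus_distr_l.
  assert (Hb1 : exp (s * (INR m * - ln 2)) * A1 p s ^ n <= exp (- (INR n * kap))).
  { eapply Rle_trans. apply Rmult_le_compat_l; [left; apply exp_pos|apply HA1].
    rewrite <- exp_plus. apply exp_le. unfold kap.
    pose proof (key_ineq n m s (ln 2) (H_K p) c C1 delta Hn0 ltac:(lra) HL Hc1 HsC1 Hm). lra. }
  assert (Hb2 : exp (s * (INR m * - ln 2)) * A2 p s ^ n <= exp (- (INR n * kap))).
  { eapply Rle_trans. apply Rmult_le_compat_l; [left; apply exp_pos|apply HA2].
    rewrite <- exp_plus. apply exp_le. unfold kap.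
    pose proof (key_ineq n m s (ln 2) (H_V1_given_K p) c C2 delta Hn0 ltac:(lra) HL Hc2 HsC2 Hm). lra. }
  lra.
Qed.
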